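(* Let $m<n$ be positive integers with $n$ even and $(m+n)\mid mn$. Then the Alon-Tarsi number of the complete bipartite graph $K_{m,n}$ equals $\frac{mn}{m+n}+1$.
   Context: For a graph $G$ with vertices ordered $x_1,\dots,x_N$ (treated as variables over a field of characteristic $0$), the graph polynomial is $P_G=\prod_{i<j,\ x_ix_j\in E(G)}(x_i-x_j)$. The Alon-Tarsi number of $G$ is $1+\min\max_k i_k$, where the minimum is over all monomials $x_1^{i_1}\cdots x_N^{i_N}$ with nonzero coefficient in $P_G$. *)

(* Defs.v *)
From HB Require Import structures.
From mathcomp Require Import all_boot all_order all_algebra.
From mathcomp Require Import mpoly.
Set Implicit Arguments. Unset Strict Implicit. Unset Printing Implicit Defensive.
Import GRing.Theory.
Local Open Scope ring_scope.

Definition graph_poly (R : comNzRingType) (N : nat) (e : rel 'I_N) : {mpoly R[N]} :=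
  \prod_(i < N) \prod_(j < N | (i < j)%N && e i j) ('X_i - 'X_j).

Definition maxdeg (N : nat) (m : 'X_{1..N}) : nat := (\max_(k < N) m k)%N.

Definition is_AT_number (N : nat) (e : rel 'I_N) (k : nat) : Prop :=
  (exists m : 'X_{1..N}, (graph_poly rat e)@_m != 0 /\ k = (1 + maxdeg m)%N) /\
  (forall m : 'X_{1..N}, (graph_poly rat e)@_m != 0 -> (k <= 1 + maxdeg m)%N).

(* Complete bipartite graph K_{m,n} on 'I_(m+n): parts {0..m-1} and {m..m+n-1}. *)
Definition Kbip (m n : nat) : rel 'I_(m + n) :=
  fun i j => (i < m)%N != (j < m)%N.

(* Main.v *)
Require Import Defs.
From HB Require Import structures.
From mathcomp Require Import all_boot all_order all_algebra.
From mathcomp Require Import mpoly.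
Set Implicit Arguments. Unset Strict Implicit. Unset Printing Implicit Defensive.
Import GRing.Theory.
Local Open Scope ring_scope.

From mathcomp Require Import zify.

Section Cnt.
Local Open Scope nat_scope.
Lemma shift_sum (G : nat -> nat) q : (forall x, G (x + q) = G x) ->
  forall s, \sum_(0 <= j < q) G (s + j) = \sum_(0 <= j < q) G j.
Proof.
move=> per; elim=> [|s IH]; first by apply: eq_bigr => j _; rewrite add0n.
have H : \sum_(0 <= j < q.+1) G (s + j) = G (s + 0) + \sum_(0 <= j < q) G (s + j.+1).
  by rewrite big_nat_recl.
move: H; rewrite big_nat_recr //= addn0 per => H.
rewrite -IH; under eq_bigr do rewrite addSnnS.
by apply/eqP; rewrite -(eqn_add2l (G s)) -H addnC.
Qed.

Lemma base_sum q p : p <= q -> \sum_(0 <= j < q) (j %% q < p) = p.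
Proof.
move=> pq.
rewrite (@eq_big_nat _ _ _ 0 q _ (fun j => (j < p : nat))); last first.
  by move=> j /andP [_ jq]; rewrite modn_small.
rewrite (@big_cat_nat _ _ _ p) //=.
rewrite (@eq_big_nat _ _ _ 0 p _ (fun j => 1)); last by move=> j /andP [_ ->].
rewrite (@eq_big_nat _ _ _ p q _ (fun j => 0)); last first.
  by move=> j /andP [pj _]; rewrite ltnNge pj.
by rewrite !sum_nat_const_nat subn0 muln1 muln0 addn0.
Qed.

Lemma block q p : 0 < q -> p <= q -> forall s t,
  \sum_(0 <= j < t * q) ((s + j) %% q < p) = t * p.
Proof.
move=> q0 pq s t.
elim: t => [|t IH]; first by rewrite mul0n big_geq.
rewrite mulSn addnC (@big_cat_nat _ _ _ (t * q)) ?leq_addr //= IH.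
rewrite -{1}(add0n (t * q)) big_addn addKn.
rewrite (@eq_big_nat _ _ _ 0 q _ (fun j => ((s + j) %% q < p) : nat)); last first.
  by move=> j _; rewrite addnA addnC modnMDl.
rewrite (@shift_sum (fun x => (x %% q < p) : nat) q); last by move=> x; rewrite modnDr.
by rewrite base_sum // mulSn addnC.
Qed.
End Cnt.

Lemma gp_eq m n : graph_poly rat (@Kbip m n) =
  \prod_(e : 'I_m * 'I_n) ('X_(lshift n e.1) - 'X_(rshift m e.2)).
Proof.
rewrite /graph_poly big_split_ord /=.
rewrite [X in _ * X]big1 ?mulr1; last first.
  move=> i _; apply: big_pred0 => j; rewrite /Kbip /=.
  apply/negbTE/andP => [[h1 h2]]; move: h2.
  have -> : (m + i < m)%N = false by rewrite ltnNge leq_addr.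
  rewrite eq_sym eqbF_neg negbK => hj; move: (leq_trans h1 (ltnW hj)); by rewrite ltnNge leq_addr.
rewrite -(pair_bigA _ (fun i j => 'X_(lshift n i) - 'X_(rshift m j))); apply: eq_bigr => i _.
rewrite big_split_ord /= big_pred0 ?mul1r; last first.
  by move=> j; rewrite /Kbip /= !ltn_ord andbF.
apply: eq_bigl => j; rewrite /Kbip /= ltn_ord (ltnNge (m + j)) leq_addr /= andbT.
by rewrite (leq_trans (ltn_ord i)) ?leq_addr.
Qed.

Section Expand.
Variables (N : nat) (E : finType) (a b : E -> 'I_N).
Definition cf (f : {ffun E -> bool}) e := if f e then a e else b e.
Definition mon (f : {ffun E -> bool}) : 'X_{1..N} := (\sum_(e : E) U_(cf f e))%MM.
Definition sgn (f : {ffun E -> bool}) : rat := \prod_e (if f e then 1 else -1).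

Lemma expand : \prod_e ('X_(a e) - 'X_(b e)) =
   \sum_(f : {ffun E -> bool}) sgn f *: 'X_[mon f] :> {mpoly rat[N]}.
Proof.
transitivity (\prod_e \sum_(x : bool) (if x then 'X_(a e) else - 'X_(b e)) : {mpoly rat[N]}).
  by apply: eq_bigr => e _; rewrite big_bool.
rewrite bigA_distr_bigA; apply: eq_bigr => f _.
rewrite /sgn /mon -mprodXE -scaler_prod; apply: eq_bigr => e _; rewrite /cf.
by case: (f e); rewrite ?scale1r ?scaleN1r.
Qed.

Lemma coef_expand u : (\prod_e ('X_(a e) - 'X_(b e)) : {mpoly rat[N]})@_u =
   \sum_(f : {ffun E -> bool}) sgn f * (mon f == u)%:R.
Proof.
rewrite expand raddf_sum; apply: eq_bigr => f _.
by rewrite /= mcoeffZ mcoeffX.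
Qed.

Lemma sgnE f : sgn f = (-1) ^+ (\sum_e ~~ f e)%N.
Proof.
rewrite /sgn -prodrXr; apply: eq_bigr => e _; by case: (f e).
Qed.

Lemma monE f v : mon f v = (\sum_e (cf f e == v))%N.
Proof.
rewrite /mon mnm_sumE; apply: eq_bigr => e _; by rewrite mnm1E.
Qed.

Lemma mdeg_mon f : mdeg (mon f) = #|E|.
Proof.
rewrite /mon mdeg_sum -sum1_card; apply: eq_bigr => e _; exact: mdeg1.
Qed.
End Expand.

Section Nat.
Local Open Scope nat_scope.
Lemma block2 q p n s : 0 < q -> p <= q -> q %| n ->
  \sum_(j < n) ((s + j) %% q < p) = n %/ q * p.
Proof.
move=> q0 pq qn; rewrite -(big_mkord xpredT (fun j => ((s + j) %% q < p) : nat)).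
by rewrite -{1}(divnK qn) block.
Qed.

Lemma sum_neg n (b : 'I_n -> bool) : \sum_(i < n) ~~ b i = n - \sum_(i < n) b i.
Proof.
have H : \sum_(i < n) ~~ b i + \sum_(i < n) b i = n.
  rewrite -big_split /= (eq_bigr (fun _ => 1)) ?sum_nat_const ?card_ord ?muln1 //.
  by move=> i _; case: (b i).
move: H; set x := \sum_(i < n) ~~ b i; set y := \sum_(i < n) b i; lia.
Qed.

Lemma sum_pair m n (G : 'I_m * 'I_n -> nat) :
  \sum_(e : 'I_m * 'I_n) G e = \sum_(i < m) \sum_(j < n) G (i, j).
Proof. by rewrite (pair_bigA _ (fun i j => G (i, j))); apply: eq_bigr => [[i j]]. Qed.
End Nat.

Section Spec.
Variables m n : nat.
Definition A (e : 'I_m * 'I_n) : 'I_(m + n) := lshift n e.1.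
Definition B (e : 'I_m * 'I_n) : 'I_(m + n) := rshift m e.2.

Lemma sum_right f : (\sum_(j < n) mon A B f (rshift m j) = \sum_e ~~ f e)%N.
Proof.
rewrite (eq_bigr (fun j : 'I_n => \sum_e (cf A B f e == rshift m j)))%N; last first.
  by move=> j _; exact: monE.
rewrite exchange_big; apply: eq_bigr => e _.
rewrite /cf /A /B; case: (f e) => /=.
  by rewrite big1 // => j _; rewrite eq_lrshift.
rewrite (bigD1 e.2) //= eq_rshift eqxx big1 // => j /negbTE.
by rewrite eq_rshift eq_sym => ->.
Qed.

Lemma mon_left f i : mon A B f (lshift n i) = (\sum_(j < n) f (i, j))%N.
Proof.
rewrite monE sum_pair (bigD1 i) //= [X in (_ + X)%N]big1 ?addn0; last first.
  move=> i' /negbTE ii; apply: big1 => j _; rewrite /cf /A /B /=.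
  by case: (f _); rewrite ?eq_lshift ?ii ?eq_rlshift.
apply: eq_bigr => j _; rewrite /cf /A /B /=.
by case: (f _); rewrite ?eq_lshift ?eqxx ?eq_rlshift.
Qed.

Lemma mon_right f j : mon A B f (rshift m j) = (\sum_(i < m) ~~ f (i, j))%N.
Proof.
rewrite monE sum_pair; apply: eq_bigr => i _.
rewrite (bigD1 j) //= big1 ?addn0; last first.
  move=> j' /negbTE jj; rewrite /cf /A /B /=.
  by case: (f _); rewrite ?eq_lrshift ?eq_rshift ?jj.
rewrite /cf /A /B /=.
by case: (f _); rewrite ?eq_lrshift ?eq_rshift ?eqxx.
Qed.
End Spec.

Theorem mainTheorem4 (m n : nat) :
  (0 < m)%N -> (m < n)%N -> ~~ odd n -> ((m + n) %| m * n)%N ->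
  is_AT_number (@Kbip m n) ((m * n) %/ (m + n) + 1)%N.
Proof.
move=> m0 mn _ dv.
set k := (m * n %/ (m + n))%N.
have kE : (k * (m + n) = m * n)%N by rewrite divnK.
have mn0 : (0 < m + n)%N by rewrite addn_gt0 m0.
have coef u : (graph_poly rat (@Kbip m n))@_u =
    \sum_(f : {ffun 'I_m * 'I_n -> bool}) sgn f * (mon (@A m n) (@B m n) f == u)%:R.
  by rewrite gp_eq; exact: (coef_expand (@A m n) (@B m n) u).
have supp u : (graph_poly rat (@Kbip m n))@_u != 0 -> exists f, mon (@A m n) (@B m n) f = u.
  rewrite coef => nz.
  case: (boolP [exists f, mon (@A m n) (@B m n) f == u]) => [/existsP [f /eqP]|/existsPn H].
    by exists f.
  by move: nz; rewrite big1 ?eqxx // => f _; rewrite (negbTE (H f)) mulr0.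
set g := gcdn m n.
have g0 : (0 < g)%N by rewrite gcdn_gt0 m0.
have gm : (g %| m)%N := dvdn_gcdl m n.
have gn : (g %| n)%N := dvdn_gcdr m n.
have dg : (m + n %| m * g)%N.
  rewrite /g muln_gcdr dvdn_gcd dv andbT.
  have -> : (m * m = m * (m + n) - m * n)%N by rewrite mulnDr addnK.
  by apply: dvdn_sub => //; apply: dvdn_mull.
set p := (m * g %/ (m + n))%N.
have pE : (p * (m + n) = m * g)%N by rewrite divnK.
move: (divnK gn) (divnK gm) => nE mE.
set n' := (n %/ g)%N in nE *. set m' := (m %/ g)%N in mE *.
have pg : (p <= g)%N.
  rewrite -(leq_pmul2r mn0) pE mulnC leq_pmul2l //; exact: leq_addr.
have rowE : (n' * p = k)%N.
  apply/eqP; rewrite -(eqn_pmul2r mn0) kE -mulnA pE -[X in _ == m * X]nE.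
  by rewrite mulnCA.
have colE : (m' * p + k = m)%N.
  apply/eqP; rewrite -(eqn_pmul2r mn0) mulnDl kE -mulnA pE.
  by rewrite mulnCA mE -mulnDr.
set f0 := [ffun e : 'I_m * 'I_n => ((e.1 + e.2) %% g < p)%N].
set u0 : 'X_{1..m + n} := [multinom k | _ < m + n].
have mon0 : mon (@A m n) (@B m n) f0 = u0.
  apply/mnmP => v; rewrite mnmE -(splitK v); case: (split v) => [i|j] /=.
    rewrite mon_left (eq_bigr (fun j : 'I_n => ((i + j) %% g < p) : nat)%N); last first.
      by move=> j _; rewrite ffunE.
    by rewrite block2.
  rewrite mon_right (eq_bigr (fun i : 'I_m => (~~ ((j + i) %% g < p)%N : nat))); last first.
    by move=> i _; rewrite ffunE /= addnC.
  rewrite sum_neg block2 // -/m'.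
  by move: colE; lia.
rewrite /is_AT_number; split.
  exists u0; split.
    have H : (-1) ^+ (n * k) * (graph_poly rat (@Kbip m n))@_u0 =
        ((\sum_(f : {ffun 'I_m * 'I_n -> bool}) (mon (@A m n) (@B m n) f == u0 : nat))%N)%:R.
      rewrite coef mulr_sumr natr_sum; apply: eq_bigr => f _.
      case: eqP => [fu|_]; last by rewrite !mulr0.
      rewrite mulr1 sgnE -sum_right fu.
      rewrite (eq_bigr (fun _ => k)); last by move=> j _; rewrite mnmE.
      rewrite sum_nat_const card_ord.
      by rewrite -exprMn mulrNN mulr1 expr1n.
    apply/negP => /eqP Z; move: H; rewrite Z mulr0 => /esym /eqP.
    by rewrite Num.Theory.pnatr_eq0 (bigD1 f0) //= mon0 eqxx.
  have -> : maxdeg u0 = k.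
    rewrite /maxdeg; apply/eqP; rewrite eqn_leq; apply/andP; split.
      by apply/bigmax_leqP => i _; rewrite mnmE.
    have := @leq_bigmax _ (fun i => u0 i) (lshift n (Ordinal m0)).
    by rewrite mnmE.
  by rewrite addnC.
move=> u /supp [f fu].
have du : mdeg u = (m * n)%N by rewrite -fu mdeg_mon card_prod !card_ord.
have : (k * (m + n) <= maxdeg u * (m + n))%N.
  rewrite kE -du mdegE.
  apply: (@leq_trans (\sum_(i < m + n) maxdeg u)%N).
    by apply: leq_sum => i _; exact: (@leq_bigmax _ (fun i => u i) i).
  by rewrite sum_nat_const card_ord mulnC.
rewrite leq_pmul2r // => h.
by rewrite addnC leq_add2l.
Qed.
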